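(* Let $0<\varepsilon\le 0.1$, let $\Box$ be a closed axis-parallel square of side length $\varepsilon$ with center $o$, let $R\subseteq\Box$ be a nonempty circular domain, let $\Lambda\ge 10$ be an integer, and let $\gamma_1,\dots,\gamma_\Lambda$ be a $\Lambda$-decomposition of $\partial(R\oplus D)$ with division points $p_1,\dots,p_\Lambda$. Set $\varepsilon'=7(\tfrac1\Lambda+\varepsilon)$. Then for every $i\in[\Lambda]$, $\gamma_i$ is $\vec v$-monotone for every $\vec v\in\mathbb{S}^1$ with $\varepsilon'\le\mathsf{ang}(\overrightarrow{op_i},\vec v)\le\pi-\varepsilon'$ or $\pi+\varepsilon'\le\mathsf{ang}(\overrightarrow{op_i},\vec v)\le2\pi-\varepsilon'$.
   Context: A circular arc is a connected portion of a circle (segments included); a circular domain is a closed subset of $\mathbb{R}^2$ whose boundary consists of finitely many circular arcs intersecting only at endpoints. $D$ is the closed unit disk at the origin, $\oplus$ is Minkowski sum. Every ray from $o$ meets $\partial(R\oplus D)$ in exactly one point. For nonzero vectors $\vec u,\vec v$, $\mathsf{ang}(\vec u,\vec v)\in[0,2\pi)$ is the clockwise ordered angle from $\vec u$ to $\vec v$. A $\Lambda$-decomposition of $\partial(R\oplus D)$: shoot $\Lambda$ rays from $o$ dividing the full angle around $o$ into $\Lambda$ angles of size $2\pi/\Lambda$; they meet $\partial(R\oplus D)$ at points $p_1,\dots,p_\Lambda$ with $\mathsf{ang}(\overrightarrow{op_{i-1}},\overrightarrow{op_i})=2\pi/\Lambda$ (indices mod $\Lambda$, $p_0=p_\Lambda$);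 $\gamma_i$ is the portion of $\partial(R\oplus D)$ between $p_{i-1}$ and $p_i$ (the one containing no other $p_j$). A curve $\gamma$ is $\vec v$-monotone if there is a homeomorphism $f:[0,1]\to\gamma$ with $\langle\vec v,f(a)\rangle<\langle\vec v,f(b)\rangle$ whenever $a<b$. *)

(* Defs.v *)
From Stdlib Require Import Reals Lra List.
Open Scope R_scope.

Definition pt : Type := (R * R)%type.
Definition padd (u v : pt) : pt := (fst u + fst v, snd u + snd v).
Definition psub (u v : pt) : pt := (fst u - fst v, snd u - snd v).
Definition pscale (k : R) (u : pt) : pt := (k * fst u, k * snd u).
Definition dot (u v : pt) : R := fst u * fst v + snd u * snd v.
Definition norm (u : pt) : R := sqrt (dot u u).
Definition dist (u v : pt) : R := norm (psub u v).

Definition interior (S : pt -> Prop) (x : pt) : Prop :=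
  exists e, 0 < e /\ forall y, dist x y < e -> S y.
Definition closure (S : pt -> Prop) (x : pt) : Prop :=
  forall e, 0 < e -> exists y, S y /\ dist x y < e.
Definition boundary (S : pt -> Prop) (x : pt) : Prop :=
  closure S x /\ ~ interior S x.
Definition is_closed (S : pt -> Prop) : Prop := forall x, closure S x -> S x.

(* A circle arc is given by center c,
   radius r > 0 and parameter interval [t0, t1] with 0 < t1 - t0 <= 2 PI;
   t1 - t0 = 2 PI is the full circle, which has no endpoints. *)
Inductive circ_arc : Type :=
  | Seg (a b : pt)
  | CArc (c : pt) (r t0 t1 : R).

Definition circ_pt (c : pt) (r t : R) : pt := (fst c + r * cos t, snd c + r * sin t).

Definition arc_wf (A : circ_arc) : Prop :=
  match A with
  | Seg a b => a <> b
  | CArc c r t0 t1 => 0 < r /\ t0 < t1 /\ t1 - t0 <= 2 * PI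
  end.

Definition arc_pts (A : circ_arc) (x : pt) : Prop :=
  match A with
  | Seg a b => exists t, 0 <= t <= 1 /\ x = padd a (pscale t (psub b a))
  | CArc c r t0 t1 => exists t, t0 <= t <= t1 /\ x = circ_pt c r t
  end.

Definition arc_endpt (A : circ_arc) (x : pt) : Prop :=
  match A with
  | Seg a b => x = a \/ x = b
  | CArc c r t0 t1 => t1 - t0 < 2 * PI /\ (x = circ_pt c r t0 \/ x = circ_pt c r t1)
  end.

Definition circular_domain (S : pt -> Prop) : Prop :=
  is_closed S /\
  exists l : list circ_arc,
    Forall arc_wf l /\
    (forall x, boundary S x <-> exists A, In A l /\ arc_pts A x) /\
    (forall i j x, (i < j)%nat -> (j < length l)%nat ->
       arc_pts (nth i l (Seg (0,0) (0,0))) x ->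
       arc_pts (nth j l (Seg (0,0) (0,0))) x ->
       arc_endpt (nth i l (Seg (0,0) (0,0))) x /\
       arc_endpt (nth j l (Seg (0,0) (0,0))) x).

Definition square (o : pt) (eps : R) (x : pt) : Prop :=
  Rabs (fst x - fst o) <= eps / 2 /\ Rabs (snd x - snd o) <= eps / 2.

Definition minkD (S : pt -> Prop) (x : pt) : Prop :=
  exists r d, S r /\ norm d <= 1 /\ x = padd r d.

Definition rotcw (th : R) (u : pt) : pt :=
  (fst u * cos th + snd u * sin th, - fst u * sin th + snd u * cos th).

(* is_cw_ang u v th : th = ang(u, v), the clockwise angle in [0, 2 PI) from u to v
   (u, v nonzero). *)
Definition is_cw_ang (u v : pt) (th : R) : Prop :=
  0 <= th < 2 * PI /\ exists k, 0 < k /\ v = pscale k (rotcw th u).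

Definition cont01 (f : R -> pt) : Prop :=
  forall a, 0 <= a <= 1 -> forall e, 0 < e ->
    exists d, 0 < d /\ forall b, 0 <= b <= 1 -> Rabs (b - a) < d -> dist (f a) (f b) < e.

Definition homeo01 (f : R -> pt) (g : pt -> Prop) : Prop :=
  (forall a, 0 <= a <= 1 -> g (f a)) /\
  (forall x, g x -> exists a, 0 <= a <= 1 /\ f a = x) /\
  (forall a b, 0 <= a <= 1 -> 0 <= b <= 1 -> f a = f b -> a = b) /\
  cont01 f /\
  (forall a, 0 <= a <= 1 -> forall e, 0 < e ->
    exists d, 0 < d /\ forall b, 0 <= b <= 1 -> dist (f a) (f b) < d -> Rabs (b - a) < e).

Definition v_monotone (v : pt) (g : pt -> Prop) : Prop :=
  exists f, homeo01 f g /\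
    forall a b, 0 <= a -> a < b -> b <= 1 -> dot v (f a) < dot v (f b).

(* g is the portion of the curve bd between p (i-1) and p i containing no other
   division point p j (j in 1..Lam, indices mod Lam with p 0 = p Lam). *)
Definition is_portion (bd : pt -> Prop) (p : nat -> pt) (Lam i : nat) (g : pt -> Prop) : Prop :=
  (forall x, g x -> bd x) /\
  (exists f, homeo01 f g /\ f 0 = p (i - 1)%nat /\ f 1 = p i) /\
  (forall j, (1 <= j <= Lam)%nat -> g (p j) ->
     j = i \/ j = (i - 1)%nat \/ (i = 1%nat /\ j = Lam)).

(* Main.v *)
Require Import Defs.
From Stdlib Require Import Reals Lra List Lia Psatz Factorial Classical FunctionalExtensionality.
Open Scope R_scope.

Lemma PI_lt_35 : PI < 7/2.
Proof.
  destruct (PI_ineq 1) as [_ H]. unfold tg_alt, PI_tg in H. simpl in H.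
  lra.
Qed.

Lemma sin_7 : forall e, 0 < e <= 1/10 -> sin (7*e) * (1 - e) >= e /\ 0 < sin (7*e).
Proof.
  intros e He. assert (H1 := PI2_1).
  destruct (SIN (7*e)) as [H _]; try lra.
  set (a := 7*e) in *.
  unfold sin_lb, sin_approx in H. cbn [sum_f_R0] in H. unfold sin_term in H.
  replace (INR (fact (2*0+1))) with 1 in H by (simpl; lra).
  replace (INR (fact (2*1+1))) with 6 in H by (simpl; lra).
  replace (INR (fact (2*2+1))) with 120 in H by (simpl; lra).
  replace (INR (fact (2*3+1))) with 5040 in H by (simpl; lra).
  simpl in H.
  assert (0 < a <= 7/10) by (unfold a; lra).
 assert (a*a <= 1) by nra. assert (0 <= a*a*a*a*a) by (apply Rmult_le_pos; [|lra]; repeat apply Rmult_le_pos; lra). assert (sin a >= a - a^3/6) by (ring_simplify in H; nra).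
  split; unfold a in *; nra.
Qed.

Definition cross (a b : pt) : R := fst a * snd b - snd a * fst b.

Lemma dot_self_nonneg a : 0 <= dot a a.
Proof. unfold dot; nra. Qed.

Lemma norm_nonneg a : 0 <= norm a.
Proof. unfold norm; apply sqrt_pos. Qed.

Lemma norm_sq a : norm a * norm a = dot a a.
Proof. unfold norm; apply sqrt_sqrt, dot_self_nonneg. Qed.

Lemma CS a b : dot a b <= norm a * norm b.
Proof.
  assert (H: Rsqr (dot a b) <= Rsqr (norm a * norm b)).
  { rewrite Rsqr_mult; unfold Rsqr; rewrite !norm_sq.
    destruct a as [a1 a2], b as [b1 b2]; unfold dot; simpl.
    assert (0 <= (a1*b2 - a2*b1)^2) by apply pow2_ge_0. nra. }
  destruct (Rle_dec (dot a b) 0).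
  - assert (0 <= norm a * norm b) by (apply Rmult_le_pos; apply norm_nonneg). lra.
  - apply Rsqr_incr_0; auto; try lra.
    apply Rmult_le_pos; apply norm_nonneg.
Qed.

Lemma CS_abs a b : Rabs (dot a b) <= norm a * norm b.
Proof.
  unfold Rabs; destruct (Rcase_abs _).
  - assert (H := CS (pscale (-1) a) b).
    replace (norm (pscale (-1) a)) with (norm a) in H.
    + unfold dot, pscale in *; simpl in *; lra.
    + unfold norm, dot, pscale; simpl; f_equal; ring.
  - apply CS.
Qed.

Lemma norm_tri a b : norm (padd a b) <= norm a + norm b.
Proof.
  assert (Hna := norm_nonneg a). assert (Hnb := norm_nonneg b).
  assert (Hn := norm_nonneg (padd a b)).
  apply Rsqr_incr_0_var; try lra.
  unfold Rsqr. rewrite norm_sq.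
  assert (H := CS a b). assert (Ha := norm_sq a). assert (Hb := norm_sq b).
  destruct a as [a1 a2], b as [b1 b2]; unfold dot, padd in *; simpl in *.
  nra.
Qed.

Lemma norm_lt a b : 0 <= b -> dot a a < b * b -> norm a < b.
Proof.
  intros Hb H. assert (Hn := norm_nonneg a). assert (Hs := norm_sq a).
  destruct (Rlt_dec (norm a) b); auto. nra.
Qed.

Lemma norm_le a b : 0 <= b -> dot a a <= b * b -> norm a <= b.
Proof.
  intros Hb H. assert (Hn := norm_nonneg a). assert (Hs := norm_sq a).
  destruct (Rle_dec (norm a) b); auto. nra.
Qed.

Lemma norm_sym a b : norm (psub a b) = norm (psub b a).
Proof. unfold norm, dot, psub; simpl; f_equal; ring. Qed.

Lemma pt_eq (a b : pt) : fst a = fst b -> snd a = snd b -> a = b.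
Proof. destruct a, b; simpl; intros; subst; auto. Qed.

Lemma chord (S : pt -> Prop) o rho x y :
  0 <= rho ->
  (forall r, S r -> norm (psub r o) <= rho) ->
  ~ Defs.interior (minkD S) x -> closure (minkD S) y -> x <> y ->
  rho * norm (psub y x) <= dot (psub y x) (psub x o) -> False.
Proof.
  intros Hrho HS Hint Hcl Hxy Hd.
  set (w := psub y x) in *. set (W := norm w).
  assert (HW2 : W * W = dot w w) by apply norm_sq.
  assert (HWpos : 0 < dot w w).
  { destruct (Rlt_dec 0 (dot w w)); auto. exfalso. apply Hxy.
    unfold w, dot, psub in n; destruct x as [x1 x2], y as [y1 y2]; simpl in n.
    assert (h1 := pow2_ge_0 (y1-x1)). assert (h2 := pow2_ge_0 (y2-x2)).
    assert (e1 : (y1-x1)*(y1-x1) = 0) by nra. assert (e2 : (y2-x2)*(y2-x2) = 0) by nra.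
    apply Rmult_integral in e1. apply Rmult_integral in e2.
    apply pt_eq; simpl; lra. }
  assert (HW0 : 0 <= W) by apply norm_nonneg.
  set (eta := Rmin 1 (dot w w / 8)).
  assert (Heta : 0 < eta /\ eta <= 1 /\ eta <= dot w w / 8).
  { unfold eta; split; [apply Rmin_pos; lra|]. split; [apply Rmin_l|apply Rmin_r]. }
  destruct (Hcl eta (proj1 Heta)) as [z [[r [d [Sr [Hd1 Hz]]]] Hyz]].
  set (X := psub x r). set (Y := psub y r).
  assert (HY : norm Y < 1 + eta).
  { replace Y with (padd (psub y z) d).
    - assert (H := norm_tri (psub y z) d). unfold Defs.dist in Hyz. lra.
    - subst z; unfold Y, padd, psub; apply pt_eq; simpl; ring. }
  assert (HYY : dot Y Y < (1+eta)*(1+eta)).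
  { rewrite <- norm_sq. assert (H:= norm_nonneg Y). nra. }
  assert (Hro : dot w (psub o r) >= - (W * rho)).
  { assert (H := CS_abs w (psub o r)). rewrite norm_sym in H.
    assert (H2 := HS r Sr).     unfold W in *. 
    assert (norm w * norm (psub r o) <= norm w * rho) by (apply Rmult_le_compat_l; auto).
    destruct (Rle_dec 0 (dot w (psub o r))). nra.
    rewrite Rabs_left in H; lra. }
  assert (HX : dot X X <= dot Y Y - dot w w).
  { assert (E1 : dot X X = dot Y Y - 2 * dot w Y + dot w w).
    { unfold X, Y, w, dot, psub; simpl; ring. }
    assert (E2 : dot w Y = dot w w + dot w (psub x o) + dot w (psub o r)).
    { unfold X, Y, w, dot, psub; simpl; ring. }
    fold w in Hd. fold W in Hd. nra. }
  set (xi := Rmin (1/2) (dot w w / 4)).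
  assert (Hxi : 0 < xi /\ xi <= 1/2 /\ xi <= dot w w / 4).
  { unfold xi; split; [apply Rmin_pos; lra|]. split; [apply Rmin_l|apply Rmin_r]. }
  assert (HnX : norm X < 1 - xi).
  { apply norm_lt; [lra|]. nra. }
  apply Hint. exists xi. split; [lra|]. intros q Hq.
  exists r, (psub q r). split; auto. split.
  - replace (psub q r) with (padd (psub q x) X).
    + assert (H := norm_tri (psub q x) X). unfold Defs.dist in Hq. rewrite norm_sym in Hq. lra.
    + unfold X, padd, psub; apply pt_eq; simpl; ring.
  - unfold padd, psub; apply pt_eq; simpl; ring.
Qed.

Lemma norm_scale k a : norm (pscale k a) = Rabs k * norm a.
Proof.
  unfold norm, dot, pscale; simpl.
  rewrite <- sqrt_Rsqr_abs, <- sqrt_mult_alt by apply Rle_0_sqr.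
  f_equal; unfold Rsqr; ring.
Qed.

Lemma bnd_far (S : pt -> Prop) o rho x :
  (forall r, S r -> norm (psub r o) <= rho) -> (exists r, S r) ->
  ~ Defs.interior (minkD S) x -> 1 - rho <= norm (psub x o).
Proof.
  intros HS [r0 Hr0] Hint.
  destruct (Rle_dec (1 - rho) (norm (psub x o))); auto. exfalso.
  assert (H1 : norm (psub x r0) < 1).
  { replace (psub x r0) with (padd (psub x o) (psub o r0)).
    - assert (H := norm_tri (psub x o) (psub o r0)). rewrite (norm_sym o r0) in H.
      assert (H2 := HS r0 Hr0). lra.
    - unfold padd, psub; apply pt_eq; simpl; ring. }
  apply Hint. exists (1 - norm (psub x r0)). split; [lra|]. intros q Hq.
  exists r0, (psub q r0). split; auto. split.
  - replace (psub q r0) with (padd (psub q x) (psub x r0)).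
    + assert (H := norm_tri (psub q x) (psub x r0)). unfold Defs.dist in Hq.
      rewrite norm_sym in Hq. lra.
    + unfold padd, psub; apply pt_eq; simpl; ring.
  - unfold padd, psub; apply pt_eq; simpl; ring.
Qed.

Lemma radial_aux (S : pt -> Prop) o rho x y t :
  0 <= rho -> rho <= 1/2 ->
  (forall r, S r -> norm (psub r o) <= rho) -> (exists r, S r) ->
  boundary (minkD S) x -> boundary (minkD S) y ->
  1 <= t -> psub y o = pscale t (psub x o) -> x = y.
Proof.
  intros H0 H1 HS Hne [_ Hx] [Hy _] Ht E.
  destruct (Req_dec t 1) as [->|Ht1].
  - destruct x, y; unfold psub, pscale in E; simpl in E. injection E; intros.
    f_equal; lra.
  - destruct (classic (x = y)) as [|Hxy]; auto. exfalso.
    apply (chord S o rho x y H0 HS Hx Hy Hxy).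
    assert (Ew : psub y x = pscale (t - 1) (psub x o)).
    { destruct x, y, o; unfold psub, pscale in *; simpl in *. injection E; intros.
      f_equal; lra. }
    rewrite Ew, norm_scale, Rabs_right by lra.
    assert (HN := bnd_far S o rho x HS Hne Hx).
    replace (dot (pscale (t - 1) (psub x o)) (psub x o)) with ((t-1) * dot (psub x o) (psub x o))
      by (unfold dot, pscale; simpl; ring).
    rewrite <- norm_sq. assert (rho <= norm (psub x o)) by lra. assert (0 <= t - 1) by lra. replace (rho * ((t - 1) * norm (psub x o))) with ((t-1)*(rho*norm (psub x o))) by ring. apply Rmult_le_compat_l; auto. apply Rmult_le_compat_r; auto. apply norm_nonneg.
Qed.

Lemma radial (S : pt -> Prop) o rho x y t :
  0 <= rho -> rho <= 1/2 ->
  (forall r, S r -> norm (psub r o) <= rho) -> (exists r, S r) ->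
  boundary (minkD S) x -> boundary (minkD S) y ->
  0 < t -> psub y o = pscale t (psub x o) -> x = y.
Proof.
  intros H0 H1 HS Hne Hx Hy Ht E.
  destruct (Rle_dec 1 t).
  - eapply radial_aux; eauto.
  - symmetry. apply (radial_aux S o rho y x (/t)); auto.
    + assert (0 < /t) by (apply Rinv_0_lt_compat; lra).
      rewrite <- (Rinv_1). apply Rinv_le_contravar; lra.
    + rewrite E. unfold pscale; destruct (psub x o); simpl; f_equal; field; lra.
Qed.

Definition clamp (t : R) : R := Rmax 0 (Rmin 1 t).

Lemma clamp_in t : 0 <= clamp t <= 1.
Proof. unfold clamp, Rmax, Rmin; repeat destruct Rle_dec; lra. Qed.

Lemma clamp_id t : 0 <= t <= 1 -> clamp t = t.
Proof. intros; unfold clamp, Rmax, Rmin; repeat destruct Rle_dec; lra. Qed.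

Lemma clamp_lip a b : Rabs (clamp a - clamp b) <= Rabs (a - b).
Proof. unfold clamp, Rmax, Rmin, Rabs; repeat destruct Rle_dec; repeat destruct Rcase_abs; lra. Qed.

Lemma cont_of_lip (f : R -> pt) (L : pt -> R) K :
  cont01 f -> 0 < K -> (forall a b, Rabs (L a - L b) <= K * norm (psub a b)) ->
  continuity (fun t => L (f (clamp t))).
Proof.
  intros Hf HK HL x. unfold continuity_pt, continue_in, limit1_in, limit_in.
  intros e He. simpl. unfold R_dist.
  destruct (Hf (clamp x) (clamp_in x) (e / K)) as [d [Hd Hd2]].
  { apply Rdiv_lt_0_compat; lra. }
  exists d. split; auto. intros y [_ Hy].
  assert (H1 := Hd2 (clamp y) (clamp_in y) (Rle_lt_trans _ _ _ (clamp_lip y x) Hy)).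
  unfold Defs.dist in H1. rewrite norm_sym in H1.
  assert (H2 := HL (f (clamp y)) (f (clamp x))).
  apply (Rmult_lt_compat_l K) in H1; auto.
  replace (K * (e / K)) with e in H1 by (field; lra). lra.
Qed.

Lemma fst_le_norm a : Rabs (fst a) <= norm a.
Proof.
  apply Rsqr_incr_0_var; [|apply norm_nonneg]. rewrite <- Rsqr_abs.
  unfold Rsqr. rewrite norm_sq. unfold dot. assert (H := pow2_ge_0 (snd a)). nra.
Qed.

Lemma snd_le_norm a : Rabs (snd a) <= norm a.
Proof.
  apply Rsqr_incr_0_var; [|apply norm_nonneg]. rewrite <- Rsqr_abs.
  unfold Rsqr. rewrite norm_sq. unfold dot. assert (H := pow2_ge_0 (fst a)). nra.
Qed.

Lemma lin_lip al be c a b :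
  Rabs ((al * fst a + be * snd a + c) - (al * fst b + be * snd b + c))
    <= (Rabs al + Rabs be + 1) * norm (psub a b).
Proof.
  assert (H1 := fst_le_norm (psub a b)). assert (H2 := snd_le_norm (psub a b)).
  unfold psub in *; simpl in *.
  replace ((al * fst a + be * snd a + c) - (al * fst b + be * snd b + c))
    with (al * (fst a - fst b) + be * (snd a - snd b)) by ring.
  eapply Rle_trans. apply Rabs_triang. rewrite !Rabs_mult.
  assert (0 <= norm (psub a b)) by apply norm_nonneg.
  unfold psub in *; simpl in *.
  assert (Rabs al * Rabs (fst a - fst b) <= Rabs al * norm (fst a - fst b, snd a - snd b))
    by (apply Rmult_le_compat_l; auto; apply Rabs_pos).
  assert (Rabs be * Rabs (snd a - snd b) <= Rabs be * norm (fst a - fst b, snd a - snd b))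
    by (apply Rmult_le_compat_l; auto; apply Rabs_pos).
  lra.
Qed.

Lemma min_lip u1 u2 v1 v2 : Rabs (Rmin u1 v1 - Rmin u2 v2) <= Rabs (u1 - u2) + Rabs (v1 - v2).
Proof. unfold Rmin, Rabs; repeat destruct Rle_dec; repeat destruct Rcase_abs; lra. Qed.

Lemma cont_lin (f : R -> pt) al be c : cont01 f ->
  continuity (fun t => al * fst (f (clamp t)) + be * snd (f (clamp t)) + c).
Proof.
  intros Hf. apply (cont_of_lip f (fun z => al * fst z + be * snd z + c) (Rabs al + Rabs be + 1)); auto.
  - assert (H1 := Rabs_pos al). assert (H2 := Rabs_pos be). lra.
  - intros; apply lin_lip.
Qed.

Lemma cont_min (f : R -> pt) al be c al' be' c' : cont01 f ->
  continuity (fun t => Rmin (al * fst (f (clamp t)) + be * snd (f (clamp t)) + c)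
                            (al' * fst (f (clamp t)) + be' * snd (f (clamp t)) + c')).
Proof.
  intros Hf. apply (cont_of_lip f (fun z => Rmin (al * fst z + be * snd z + c) (al' * fst z + be' * snd z + c'))
     ((Rabs al + Rabs be + 1) + (Rabs al' + Rabs be' + 1))); auto.
  - assert (H1 := Rabs_pos al). assert (H2 := Rabs_pos be).
    assert (H3 := Rabs_pos al'). assert (H4 := Rabs_pos be'). lra.
  - intros a b. eapply Rle_trans. apply min_lip. rewrite Rmult_plus_distr_r.
    apply Rplus_le_compat; apply lin_lip.
Qed.

Lemma continuity_ext' (f g : R -> R) : (forall x, f x = g x) -> continuity f -> continuity g.
Proof. intros H Hf. replace g with f; auto. apply functional_extensionality; auto. Qed.

Lemma cont_cross_l (f : R -> pt) o B : cont01 f -> continuity (fun t => cross B (psub (f (clamp t)) o)).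
Proof.
  intros Hf. eapply continuity_ext'. 2: apply (cont_lin f (- snd B) (fst B) (snd B * fst o - fst B * snd o) Hf).
  intros x; unfold cross, psub; simpl; ring.
Qed.

Lemma cont_cross_r (f : R -> pt) o B : cont01 f -> continuity (fun t => cross (psub (f (clamp t)) o) B).
Proof.
  intros Hf. eapply continuity_ext'. 2: apply (cont_lin f (snd B) (- fst B) (fst B * snd o - snd B * fst o) Hf).
  intros x; unfold cross, psub; simpl; ring.
Qed.

Lemma cont_min_cross (f : R -> pt) o A B : cont01 f ->
  continuity (fun t => Rmin (- cross (psub (f (clamp t)) o) B) (- cross A (psub (f (clamp t)) o))).
Proof.
  intros Hf. eapply continuity_ext'.
  2: apply (cont_min f (- snd B) (fst B) (- (fst B * snd o - snd B * fst o))
                       (snd A) (- fst A) (- (snd A * fst o - fst A * snd o)) Hf).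
  intros x; unfold cross, psub; simpl. f_equal; ring.
Qed.

Definition good (S : pt -> Prop) o rho :=
  0 <= rho /\ rho <= 1/2 /\ (forall r, S r -> norm (psub r o) <= rho) /\ (exists r, S r).

Lemma ray_hit S o rho x y K c : good S o rho -> boundary (minkD S) x -> boundary (minkD S) y ->
  0 < K -> 0 < c -> pscale K (psub y o) = pscale c (psub x o) -> x = y.
Proof.
  intros [H0 [H1 [HS Hne]]] Hx Hy HK Hc E.
  apply (radial S o rho x y (c / K)); auto.
  - apply Rdiv_lt_0_compat; auto.
  - destruct x, y, o; unfold psub, pscale in *; simpl in *. injection E; intros.
    f_equal; field_simplify; try lra; apply (Rmult_eq_reg_l K); try lra; field_simplify; lra.
Qed.

Lemma zero_contra S o rho y K V : good S o rho -> boundary (minkD S) y ->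
  0 < K -> pscale K (psub y o) = pscale 0 V -> False.
Proof.
  intros [H0 [H1 [HS Hne]]] [_ Hy] HK E.
  assert (Hn := bnd_far S o rho y HS Hne Hy).
  assert (psub y o = (0,0)).
  { destruct (psub y o); unfold pscale in E; simpl in E; injection E; intros.
    f_equal; nra. }
  rewrite H in Hn. unfold norm, dot in Hn; simpl in Hn.
  replace (0*0+0*0) with 0 in Hn by ring. rewrite sqrt_0 in Hn. lra.
Qed.

Lemma decomp A B Z : pscale (- cross A B) Z = padd (pscale (- cross Z B) A) (pscale (- cross A Z) B).
Proof. unfold pscale, padd, cross; apply pt_eq; simpl; ring. Qed.

Lemma cross_rot A phi : cross A (rotcw phi A) = - dot A A * sin phi.
Proof. unfold cross, rotcw, dot; simpl; ring. Qed.

Lemma cross_rot2 A phi : cross A (rotcw phi (rotcw phi A)) = - dot A A * (2 * sin phi * cos phi).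
Proof. unfold cross, rotcw, dot; simpl; ring. Qed.

Lemma cross_scale_r A c V : cross A (pscale c V) = c * cross A V.
Proof. unfold cross, pscale; simpl; ring. Qed.
Lemma cross_scale_l A c V : cross (pscale c V) A = c * cross V A.
Proof. unfold cross, pscale; simpl; ring. Qed.
Lemma rot_scale phi c V : rotcw phi (pscale c V) = pscale c (rotcw phi V).
Proof. unfold rotcw, pscale; apply pt_eq; simpl; ring. Qed.
Lemma cross_self A : cross A A = 0.
Proof. unfold cross; ring. Qed.
Lemma cross_anti A B : cross A B = - cross B A.
Proof. unfold cross; ring. Qed.

Lemma dot_pos_bd S o rho y : good S o rho -> boundary (minkD S) y -> 0 < dot (psub y o) (psub y o).
Proof.
  intros HG Hy. destruct (Rlt_dec 0 (dot (psub y o) (psub y o))) as [|n]; auto.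
  exfalso. apply (zero_contra S o rho y 1 (0,0) HG Hy); [lra|].
  assert (H := dot_self_nonneg (psub y o)).
  destruct (psub y o) as [a b]; unfold dot in *; simpl in *.
  assert (a*a = 0) by nra. assert (b*b = 0) by nra.
  apply Rmult_integral in H0. apply Rmult_integral in H1.
  unfold pscale; simpl; f_equal; lra.
Qed.

Lemma cone_core S o rho (f : R -> pt) PA phi k1 k2 :
  good S o rho -> cont01 f ->
  (forall a b, 0 <= a <= 1 -> 0 <= b <= 1 -> f a = f b -> a = b) ->
  (forall t, 0 <= t <= 1 -> boundary (minkD S) (f t)) ->
  boundary (minkD S) PA ->
  (forall t, 0 <= t <= 1 -> f t <> PA) ->
  0 < phi < PI/2 -> 0 < k1 -> 0 < k2 ->
  psub (f 0) o = pscale k1 (rotcw phi (psub PA o)) ->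
  psub (f 1) o = pscale k2 (rotcw phi (psub (f 0) o)) ->
  forall t, 0 <= t <= 1 ->
    0 <= - cross (psub (f t) o) (psub (f 1) o) /\ 0 <= - cross (psub (f 0) o) (psub (f t) o).
Proof.
  intros HG Hc Hinj Hbd HPA Hna Hphi Hk1 Hk2 E1 E2.
  assert (Hb1 : boundary (minkD S) (f 1)) by (apply Hbd; lra).
  assert (Hb0 : boundary (minkD S) (f 0)) by (apply Hbd; lra).
  set (A := psub PA o) in *. set (U := psub (f 0) o) in *. set (U' := psub (f 1) o) in *.
  assert (Hs : 0 < sin phi) by (apply sin_gt_0; lra).
  assert (Hco : 0 < cos phi) by (apply cos_gt_0; lra).
  assert (HA : 0 < dot A A) by (apply (dot_pos_bd S o rho PA); auto).
  assert (HU : 0 < dot U U) by (apply (dot_pos_bd S o rho (f 0)); auto; apply Hbd; lra).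
  assert (cAU : - cross A U = k1 * dot A A * sin phi).
  { rewrite E1, cross_scale_r, cross_rot; ring. }
  assert (cUU' : - cross U U' = k2 * dot U U * sin phi).
  { rewrite E2, cross_scale_r, cross_rot; ring. }
  assert (cAU' : - cross A U' = k1 * k2 * dot A A * (2 * sin phi * cos phi)).
  { rewrite E2, E1, rot_scale, cross_scale_r, cross_scale_r, cross_rot2; ring. }
  set (K := - cross A U') in *.
  assert (HK : 0 < K).
  { rewrite cAU'. repeat apply Rmult_lt_0_compat; lra. }
  set (K' := - cross U U') in *.
  assert (HK' : 0 < K').
  { rewrite cUU'. repeat apply Rmult_lt_0_compat; lra. }
  assert (HmuU : 0 < - cross A U).
  { rewrite cAU. repeat apply Rmult_lt_0_compat; lra. }
  set (Z := fun t => psub (f t) o).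
  assert (ZC : forall t, Z (clamp t) = psub (f (clamp t)) o) by reflexivity.
  assert (D : forall t, 0 <= t <= 1 -> 0 <= - cross (Z t) U' /\ 0 <= - cross A (Z t)).
  { intros t0 Ht0.
    set (m := fun t => Rmin (- cross (psub (f (clamp t)) o) U') (- cross A (psub (f (clamp t)) o))).
    assert (Hm : continuity m) by (apply cont_min_cross; auto).
    destruct (Rle_dec 0 (m t0)) as [Hm0|Hm0].
    { unfold m in Hm0. rewrite clamp_id in Hm0 by lra.
      split; eapply Rle_trans; try apply Hm0; [apply Rmin_l|apply Rmin_r]. }
    exfalso.
    assert (Hm00 : 0 < m 0).
    { unfold m. rewrite clamp_id by lra. apply Rmin_pos; [exact HK'|exact HmuU]. }
    assert (Ht0' : 0 < t0).
    { destruct (Req_dec t0 0) as [->|]; lra. }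
    destruct (IVT (fun t => - m t) 0 t0) as [z [Hz Hmz]].
    { apply continuity_opp; auto. }
    { lra. }
    { lra. }
    { lra. }
    assert (Hmz' : m z = 0) by lra.
    unfold m in Hmz'. rewrite clamp_id in Hmz' by lra.
    assert (Hd := decomp A U' (psub (f z) o)). fold K in Hd.
    assert (Hl : 0 <= - cross (psub (f z) o) U').
    { rewrite <- Hmz'. apply Rmin_l. }
    assert (Hr : 0 <= - cross A (psub (f z) o)).
    { rewrite <- Hmz'. apply Rmin_r. }
    assert (Hbz : boundary (minkD S) (f z)) by (apply Hbd; lra).
    unfold Rmin in Hmz'. destruct (Rle_dec _ _) as [Hle|Hle].
    -
      rewrite Hmz' in Hd.
      destruct (Req_dec (- cross A (psub (f z) o)) 0) as [Hr0|Hr0].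
      + rewrite Hr0 in Hd. apply (zero_contra S o rho (f z) K (0,0) HG Hbz HK).
        rewrite Hd. unfold pscale, padd; simpl; f_equal; ring.
      + assert (Ef : f 1 = f z).
        { apply (ray_hit S o rho (f 1) (f z) K (- cross A (psub (f z) o))); auto; try lra.
          rewrite Hd. unfold U', pscale, padd; simpl; f_equal; ring. }
        apply Hinj in Ef; try lra. subst z.
        assert (t0 = 1) by lra. subst t0.
        apply Hm0. unfold m. rewrite clamp_id by lra. fold U'. rewrite cross_self.
        fold K. apply Rmin_glb; lra.
    - rewrite Hmz' in Hd.
      destruct (Req_dec (- cross (psub (f z) o) U') 0) as [Hr0|Hr0].
      + rewrite Hr0 in Hd. apply (zero_contra S o rho (f z) K (0,0) HG Hbz HK).
        rewrite Hd. unfold pscale, padd; simpl; f_equal; ring.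
      + assert (Ef : PA = f z).
        { apply (ray_hit S o rho PA (f z) K (- cross (psub (f z) o) U')); auto; try lra.
          rewrite Hd. unfold A, pscale, padd; simpl; f_equal; ring. }
        apply (Hna z); auto; lra. }
  assert (Hb : forall t, 0 <= t <= 1 -> 0 <= - cross U (Z t)).
  { intros t0 Ht0. destruct (Rle_dec 0 (- cross U (Z t0))) as [|Hn]; auto. exfalso.
    assert (Ht1 : t0 < 1).
    { destruct (Req_dec t0 1) as [->|]; [|lra]. exfalso. apply Hn. unfold Z; fold U'; fold K'. lra. }
    destruct (IVT (fun t => - cross U (psub (f (clamp t)) o)) t0 1) as [z [Hz Hgz]].
    { apply continuity_opp. apply cont_cross_l; auto. }
    { lra. }
    { rewrite clamp_id by lra. unfold Z in Hn. lra. }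
    { rewrite clamp_id by lra. fold U'; fold K'. lra. }
    rewrite clamp_id in Hgz by lra.
    assert (Hbz : boundary (minkD S) (f z)) by (apply Hbd; lra).
    assert (Hd := decomp U U' (psub (f z) o)). fold K' in Hd.
    assert (Hb0' : - cross U (psub (f z) o) = 0) by lra. rewrite Hb0' in Hd.
    assert (HDz := proj2 (D z ltac:(split; lra))). unfold Z in HDz.
    assert (Hrel : K' * (- cross A (psub (f z) o)) = (- cross (psub (f z) o) U') * (- cross A U)).
    { replace (K' * (- cross A (psub (f z) o))) with (- cross A (pscale K' (psub (f z) o)))
        by (rewrite cross_scale_r; ring).
      rewrite Hd. unfold cross, pscale, padd; simpl; ring. }
    assert (Ha : 0 <= - cross (psub (f z) o) U').
    { destruct (Rle_dec 0 (- cross (psub (f z) o) U')); auto.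
      assert (K' * - cross A (psub (f z) o) >= 0) by (apply Rle_ge, Rmult_le_pos; lra). nra. }
    destruct (Req_dec (- cross (psub (f z) o) U') 0) as [Ha0|Ha0].
    - rewrite Ha0 in Hd. apply (zero_contra S o rho (f z) K' (0,0) HG Hbz HK').
      rewrite Hd. unfold pscale, padd; simpl; f_equal; ring.
    - assert (Ef : f 0 = f z).
      { apply (ray_hit S o rho (f 0) (f z) K' (- cross (psub (f z) o) U')); auto; try lra.
        rewrite Hd. unfold U, pscale, padd; simpl; f_equal; ring. }
      apply Hinj in Ef; try lra. subst z. assert (t0 = 0) by lra. subst t0.
      apply Hn. unfold Z; fold U. rewrite cross_self. lra. }
  assert (Ha : forall t, 0 <= t <= 1 -> 0 <= - cross (Z t) U').
  { intros t0 Ht0. destruct (Rle_dec 0 (- cross (Z t0) U')) as [|Hn]; auto. exfalso.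
    assert (Ht1 : 0 < t0).
    { destruct (Req_dec t0 0) as [->|]; [|lra]. exfalso. apply Hn. unfold Z; fold U; fold K'. lra. }
    destruct (IVT (fun t => cross (psub (f (clamp t)) o) U') 0 t0) as [z [Hz Hgz]].
    { apply cont_cross_r; auto. }
    { lra. }
    { rewrite clamp_id by lra. fold U. assert (cross U U' = - K') by (unfold K'; ring). lra. }
    { rewrite clamp_id by lra. unfold Z in Hn. lra. }
    rewrite clamp_id in Hgz by lra.
    assert (Hbz : boundary (minkD S) (f z)) by (apply Hbd; lra).
    assert (Hd := decomp U U' (psub (f z) o)). fold K' in Hd.
    assert (Ha0' : - cross (psub (f z) o) U' = 0) by lra. rewrite Ha0' in Hd.
    assert (HDz := proj2 (D z ltac:(split; lra))). unfold Z in HDz.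
    assert (Hrel : K' * (- cross A (psub (f z) o)) = (- cross U (psub (f z) o)) * K).
    { replace (K' * (- cross A (psub (f z) o))) with (- cross A (pscale K' (psub (f z) o)))
        by (rewrite cross_scale_r; ring).
      rewrite Hd. unfold K, cross, pscale, padd; simpl; ring. }
    assert (Hb' : 0 <= - cross U (psub (f z) o)).
    { destruct (Rle_dec 0 (- cross U (psub (f z) o))); auto.
      assert (K' * - cross A (psub (f z) o) >= 0) by (apply Rle_ge, Rmult_le_pos; lra). nra. }
    destruct (Req_dec (- cross U (psub (f z) o)) 0) as [Hb0'|Hb0'].
    - rewrite Hb0' in Hd. apply (zero_contra S o rho (f z) K' (0,0) HG Hbz HK').
      rewrite Hd. unfold pscale, padd; simpl; f_equal; ring.
    - assert (Ef : f 1 = f z).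
      { apply (ray_hit S o rho (f 1) (f z) K' (- cross U (psub (f z) o))); auto; try lra.
        rewrite Hd. unfold U', pscale, padd; simpl; f_equal; ring. }
      apply Hinj in Ef; try lra. subst z. assert (t0 = 1) by lra. subst t0.
      apply Hn. unfold Z; fold U'. rewrite cross_self. lra. }
  intros t Ht. split; [apply Ha|apply Hb]; auto.
Qed.

Lemma rot_dot th X : dot (rotcw th X) (rotcw th X) = dot X X.
Proof.
  assert (H := sin2_cos2 th). unfold Rsqr in H.
  unfold rotcw, dot; simpl. nra.
Qed.

Lemma sqrt_of_sq a b : 0 <= a -> 0 <= b -> a * a = b -> a = sqrt b.
Proof. intros Ha Hb E. subst b. rewrite sqrt_square; auto. Qed.

Lemma Pbound S o rho (f : R -> pt) PA phi k1 k2 v k th sg s :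
  good S o rho -> cont01 f ->
  (forall a b, 0 <= a <= 1 -> 0 <= b <= 1 -> f a = f b -> a = b) ->
  (forall t, 0 <= t <= 1 -> boundary (minkD S) (f t)) ->
  boundary (minkD S) PA ->
  (forall t, 0 <= t <= 1 -> f t <> PA) ->
  0 < phi < PI/2 -> 0 < k1 -> 0 < k2 ->
  psub (f 0) o = pscale k1 (rotcw phi (psub PA o)) ->
  psub (f 1) o = pscale k2 (rotcw phi (psub (f 0) o)) ->
  0 < k -> v = pscale k (rotcw th (psub (f 1) o)) -> dot v v = 1 ->
  (sg = 1 \/ sg = -1) -> s <= sg * sin th -> s <= sg * sin (th + phi) -> rho <= s * (1 - rho) -> 0 < s ->
  forall t, 0 <= t <= 1 -> rho <= - sg * dot (snd v, - fst v) (psub (f t) o).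
Proof.
  intros HG Hc Hinj Hbd HPA Hna Hphi Hk1 Hk2 E1 E2 Hk Ev Hv Hsg Hs1 Hs2 Hsr Hs t Ht.
  assert (Hcone := cone_core S o rho f PA phi k1 k2 HG Hc Hinj Hbd HPA Hna Hphi Hk1 Hk2 E1 E2 t Ht).
  assert (Hb1 : boundary (minkD S) (f 1)) by (apply Hbd; lra).
  assert (Hb0 : boundary (minkD S) (f 0)) by (apply Hbd; lra).
  assert (Hbt : boundary (minkD S) (f t)) by (apply Hbd; lra).
  set (U := psub (f 0) o) in *. set (U' := psub (f 1) o) in *. set (Z := psub (f t) o) in *.
  set (q := (snd v, - fst v)).
  assert (HU : 0 < dot U U) by (apply (dot_pos_bd S o rho (f 0)); auto).
  assert (Hs0 : 0 < sin phi) by (apply sin_gt_0; lra).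
  assert (HK' : 0 < - cross U U').
  { rewrite E2, cross_scale_r, cross_rot. assert (0 < k2 * dot U U * sin phi) by (repeat apply Rmult_lt_0_compat; lra). lra. }
  set (K' := - cross U U') in *.
  assert (Hd := decomp U U' Z). fold K' in Hd.
  set (al := - cross Z U' / K'). set (be := - cross U Z / K').
  assert (EZ : Z = padd (pscale al U) (pscale be U')).
  { unfold al, be. destruct Z as [z1 z2]. unfold pscale, padd in *; simpl in *.
    injection Hd; intros H1 H2. apply pt_eq; simpl; field_simplify; try lra;
    apply (Rmult_eq_reg_l K'); try lra; field_simplify; lra. }
  assert (Hal : 0 <= al) by (unfold al; apply Rmult_le_pos; [lra|left; apply Rinv_0_lt_compat; lra]).
  assert (Hbe : 0 <= be) by (unfold be; apply Rmult_le_pos; [lra|left; apply Rinv_0_lt_compat; lra]).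
  assert (HUU' : dot U' U' = k2 * k2 * dot U U).
  { rewrite E2. unfold pscale at 1 2. rewrite <- (rot_dot phi U). unfold dot, pscale; simpl; ring. }
  assert (Hkn : k * k * dot U' U' = 1).
  { rewrite <- Hv, Ev. rewrite <- (rot_dot th U'). unfold dot, pscale; simpl; ring. }
  assert (HnU' : k * dot U' U' = norm U').
  { unfold norm. apply sqrt_of_sq; [apply Rmult_le_pos; [lra|apply dot_self_nonneg]|apply dot_self_nonneg|].
    replace (k * dot U' U' * (k * dot U' U')) with ((k*k*dot U' U') * dot U' U') by ring. rewrite Hkn; ring. }
  assert (HnU : k * k2 * dot U U = norm U).
  { unfold norm. apply sqrt_of_sq; [repeat apply Rmult_le_pos; try lra; apply dot_self_nonneg|apply dot_self_nonneg|].
    replace (k * k2 * dot U U * (k * k2 * dot U U)) with ((k*k*(k2*k2*dot U U)) * dot U U) by ring.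
    rewrite <- HUU', Hkn; ring. }
  assert (HqU' : dot q U' = - norm U' * sin th).
  { rewrite <- HnU'. unfold q. rewrite Ev. unfold dot, pscale, rotcw; simpl. ring. }
  assert (HqU : dot q U = - norm U * sin (th + phi)).
  { rewrite <- HnU. unfold q. rewrite Ev. fold U'. rewrite E2. rewrite sin_plus.
    unfold dot, pscale, rotcw; simpl. ring. }
  assert (HqZ : dot q Z = al * dot q U + be * dot q U').
  { rewrite EZ. unfold dot, padd, pscale; simpl; ring. }
  assert (HnZ : norm Z <= al * norm U + be * norm U').
  { rewrite EZ. eapply Rle_trans. apply norm_tri. rewrite !norm_scale, !Rabs_right by lra. lra. }
  assert (HZ1 : 1 - rho <= norm Z).
  { destruct HG as [? [? [? ?]]]. apply (bnd_far S o rho (f t)); auto. apply Hbt. }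
  assert (HnU0 := norm_nonneg U). assert (HnU'0 := norm_nonneg U').
  assert (E : - sg * dot q Z = al * norm U * (sg * sin (th + phi)) + be * norm U' * (sg * sin th)).
  { rewrite HqZ, HqU, HqU'. ring. }
  rewrite E.
  assert (al * norm U * s <= al * norm U * (sg * sin (th + phi))).
  { apply Rmult_le_compat_l; auto. apply Rmult_le_pos; auto. }
  assert (be * norm U' * s <= be * norm U' * (sg * sin th)).
  { apply Rmult_le_compat_l; auto. apply Rmult_le_pos; auto. }
  assert (s * (1 - rho) <= s * (al * norm U + be * norm U')).
  { apply Rmult_le_compat_l; lra. }
  lra.
Qed.

Lemma h_inj S o rho (f : R -> pt) PA phi k1 k2 v k th sg s :
  good S o rho -> cont01 f ->
  (forall a b, 0 <= a <= 1 -> 0 <= b <= 1 -> f a = f b -> a = b) ->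
  (forall t, 0 <= t <= 1 -> boundary (minkD S) (f t)) ->
  boundary (minkD S) PA ->
  (forall t, 0 <= t <= 1 -> f t <> PA) ->
  0 < phi < PI/2 -> 0 < k1 -> 0 < k2 ->
  psub (f 0) o = pscale k1 (rotcw phi (psub PA o)) ->
  psub (f 1) o = pscale k2 (rotcw phi (psub (f 0) o)) ->
  0 < k -> v = pscale k (rotcw th (psub (f 1) o)) -> dot v v = 1 ->
  (sg = 1 \/ sg = -1) -> s <= sg * sin th -> s <= sg * sin (th + phi) -> rho <= s * (1 - rho) -> 0 < s ->
  forall a b, 0 <= a <= 1 -> 0 <= b <= 1 -> dot v (f a) = dot v (f b) -> a = b.
Proof.
  intros HG Hc Hinj Hbd HPA Hna Hphi Hk1 Hk2 E1 E2 Hk Ev Hv Hsg Hs1 Hs2 Hsr Hs a b Ha Hb Eab.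
  assert (Pa := Pbound S o rho f PA phi k1 k2 v k th sg s HG Hc Hinj Hbd HPA Hna Hphi Hk1 Hk2 E1 E2 Hk Ev Hv Hsg Hs1 Hs2 Hsr Hs a Ha).
  assert (Pb := Pbound S o rho f PA phi k1 k2 v k th sg s HG Hc Hinj Hbd HPA Hna Hphi Hk1 Hk2 E1 E2 Hk Ev Hv Hsg Hs1 Hs2 Hsr Hs b Hb).
  apply Hinj; auto.
  destruct (classic (f a = f b)) as [|Hne]; auto. exfalso.
  destruct HG as [H0 [H1 [HS Hne']]].
  assert (Hxa : boundary (minkD S) (f a)) by auto.
  assert (Hxb : boundary (minkD S) (f b)) by auto.
  set (q := (snd v, - fst v)) in *.
  set (w := psub (f b) (f a)).
  set (c := dot w q).
  assert (Hw : w = pscale c q).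
  { unfold c, q, w. destruct v as [v1 v2]. destruct (f a) as [a1 a2], (f b) as [b1 b2].
    unfold dot, psub, pscale in *; simpl in *.
    assert (Ed : (b1-a1)*v1 + (b2-a2)*v2 = 0) by (ring_simplify; lra).
    apply pt_eq; simpl.
    - apply Rminus_diag_uniq.
      replace (b1 - a1 - ((b1 - a1) * v2 + (b2 - a2) * - v1) * v2) with
        ((b1 - a1) * (1 - (v1*v1+v2*v2)) + v1 * ((b1-a1)*v1 + (b2-a2)*v2)) by ring.
      rewrite Ed, Hv; ring.
    - apply Rminus_diag_uniq.
      replace (b2 - a2 - ((b1 - a1) * v2 + (b2 - a2) * - v1) * - v1) with
        ((b2 - a2) * (1 - (v1*v1+v2*v2)) + v2 * ((b1-a1)*v1 + (b2-a2)*v2)) by ring.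
      rewrite Ed, Hv; ring. }
  assert (Hqq : dot q q = 1) by (unfold q, dot in *; simpl; lra).
  assert (Hnw : norm w = Rabs c).
  { rewrite Hw, norm_scale. unfold norm. rewrite Hqq, sqrt_1. ring. }
  assert (Hsg2 : sg * sg = 1) by (destruct Hsg; subst; ring).
  assert (Habs : Rabs c = sg * c \/ Rabs c = - (sg * c)).
  { unfold Rabs; destruct Rcase_abs; destruct Hsg; subst sg; lra. }
  destruct (Rtotal_order (sg * c) 0) as [Hlt|[Heq|Hgt]].
  - apply (chord S o rho (f a) (f b) H0 HS (proj2 Hxa) (proj1 Hxb) Hne).
    fold w. rewrite Hnw.
    assert (E : dot w (psub (f a) o) = (- (sg * c)) * (- sg * dot q (psub (f a) o))).
    { rewrite Hw. replace ((- (sg * c)) * (- sg * dot q (psub (f a) o))) with ((sg*sg) * (c * dot q (psub (f a) o))) by ring.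
      rewrite Hsg2. unfold dot, pscale; simpl; ring. }
    rewrite E. destruct Habs as [Ha'|Ha']; [|rewrite Ha'].
    + exfalso. assert (0 <= Rabs c) by apply Rabs_pos. lra.
    + rewrite Rmult_comm. apply Rmult_le_compat_l; lra.
  - assert (Hc0 : c = 0) by (destruct Hsg; subst sg; lra).
    apply Hne. assert (H2 : w = (0,0)) by (rewrite Hw, Hc0; unfold pscale; simpl; f_equal; ring).
    unfold w, psub in H2. destruct (f a), (f b); simpl in *. injection H2; intros. f_equal; lra.
  - apply (chord S o rho (f b) (f a) H0 HS (proj2 Hxb) (proj1 Hxa) (not_eq_sym Hne)).
    replace (psub (f a) (f b)) with (pscale (-1) w) by (unfold w, psub, pscale; apply pt_eq; simpl; ring).
    rewrite norm_scale, Hnw. replace (Rabs (-1)) with 1 by (rewrite Rabs_left; lra).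
    assert (E : dot (pscale (-1) w) (psub (f b) o) = (sg * c) * (- sg * dot q (psub (f b) o))).
    { rewrite Hw. replace ((sg * c) * (- sg * dot q (psub (f b) o))) with (- (sg*sg) * (c * dot q (psub (f b) o))) by ring.
      rewrite Hsg2. unfold dot, pscale; simpl; ring. }
    rewrite E. destruct Habs as [Ha'|Ha']; [rewrite Ha'|].
    + rewrite Rmult_1_l, Rmult_comm. apply Rmult_le_compat_l; lra.
    + exfalso. assert (0 <= Rabs c) by apply Rabs_pos. lra.
Qed.

Lemma mono_between (h : R -> R) a b t :
  continuity (fun t => h (clamp t)) ->
  (forall x y, 0 <= x <= 1 -> 0 <= y <= 1 -> h x = h y -> x = y) ->
  0 <= a -> a < t -> t < b -> b <= 1 -> h a < h b -> h a < h t /\ h t < h b.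
Proof.
  intros Hc Hi Ha Hat Htb Hb Hab.
  assert (Hg : forall c, continuity (fun x => h (clamp x) - c)).
  { intros c. apply continuity_minus; auto. apply continuity_const. intros ? ?; auto. }
  split.
  - destruct (Rlt_dec (h a) (h t)) as [|Hn]; auto. exfalso.
    destruct (Req_dec (h a) (h t)) as [E|E].
    { apply Hi in E; lra. }
    destruct (IVT (fun x => h (clamp x) - h a) t b (Hg _)) as [z [Hz Ez]].
    { lra. } { rewrite clamp_id by lra. lra. } { rewrite clamp_id by lra. lra. }
    rewrite clamp_id in Ez by lra. assert (E2 : h z = h a) by lra. apply Hi in E2; lra.
  - destruct (Rlt_dec (h t) (h b)) as [|Hn]; auto. exfalso.
    destruct (Req_dec (h t) (h b)) as [E|E].
    { apply Hi in E; lra. }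
    destruct (IVT (fun x => h (clamp x) - h b) a t (Hg _)) as [z [Hz Ez]].
    { lra. } { rewrite clamp_id by lra. lra. } { rewrite clamp_id by lra. lra. }
    rewrite clamp_id in Ez by lra. assert (E2 : h z = h b) by lra. apply Hi in E2; lra.
Qed.

Lemma mono_inc (h : R -> R) :
  continuity (fun t => h (clamp t)) ->
  (forall x y, 0 <= x <= 1 -> 0 <= y <= 1 -> h x = h y -> x = y) ->
  h 0 < h 1 -> forall a b, 0 <= a -> a < b -> b <= 1 -> h a < h b.
Proof.
  intros Hc Hi H01 a b Ha Hab Hb.
  destruct (Req_dec a 0) as [->|Ha0].
  - destruct (Req_dec b 1) as [->|Hb1]; auto.
    apply (mono_between h 0 1 b); auto; lra.
  - destruct (Req_dec b 1) as [->|Hb1].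
    + apply (mono_between h 0 1 a); auto; lra.
    + assert (H1 := mono_between h 0 1 b Hc Hi ltac:(lra) ltac:(lra) ltac:(lra) ltac:(lra) H01).
      apply (mono_between h 0 b a); auto; lra.
Qed.

Lemma mono_dicho (h : R -> R) :
  continuity (fun t => h (clamp t)) ->
  (forall x y, 0 <= x <= 1 -> 0 <= y <= 1 -> h x = h y -> x = y) ->
  (forall a b, 0 <= a -> a < b -> b <= 1 -> h a < h b) \/
  (forall a b, 0 <= a -> a < b -> b <= 1 -> h b < h a).
Proof.
  intros Hc Hi.
  destruct (Rtotal_order (h 0) (h 1)) as [H|[H|H]].
  - left. apply mono_inc; auto.
  - apply Hi in H; lra.
  - right. intros a b Ha Hab Hb.
    assert (Hm := mono_inc (fun t => - h t)). simpl in Hm.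
    assert (- h a < - h b); [|lra].
    apply Hm; auto.
    + apply continuity_opp in Hc. auto.
    + intros x y Hx Hy E. apply Hi; auto. lra.
Qed.

Lemma homeo_rev (f : R -> pt) g : homeo01 f g -> homeo01 (fun a => f (1 - a)) g.
Proof.
  intros [H1 [H2 [H3 [H4 H5]]]]. split; [|split; [|split; [|split]]].
  - intros a Ha. apply H1; lra.
  - intros x Hx. destruct (H2 x Hx) as [a [Ha E]]. exists (1 - a). split; [lra|].
    replace (1 - (1 - a)) with a by ring. auto.
  - intros a b Ha Hb E. apply H3 in E; lra.
  - intros a Ha e He. destruct (H4 (1 - a) ltac:(split; lra) e He) as [d [Hd Hd2]].
    exists d. split; auto. intros b Hb Hab. apply Hd2; [split; lra|].
    replace (1 - b - (1 - a)) with (- (b - a)) by ring. rewrite Rabs_Ropp; auto.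
  - intros a Ha e He. destruct (H5 (1 - a) ltac:(split; lra) e He) as [d [Hd Hd2]].
    exists d. split; auto. intros b Hb Hab.
    assert (H := Hd2 (1 - b) ltac:(split; lra) Hab).
    replace (1 - b - (1 - a)) with (- (b - a)) in H by ring. rewrite Rabs_Ropp in H; auto.
Qed.

Lemma sin_ge a y : 0 < a <= PI/2 -> a <= y <= PI - a -> sin a <= sin y.
Proof.
  intros Ha Hy. destruct (Rle_dec y (PI/2)).
  - apply sin_incr_1; lra.
  - rewrite <- (sin_PI_x y). apply sin_incr_1; lra.
Qed.

Lemma square_norm o eps r : 0 <= eps -> square o eps r -> norm (psub r o) <= eps.
Proof.
  intros He [H1 H2]. apply norm_le; auto.
  unfold dot, psub; simpl.
  assert (A1 : (fst r - fst o) * (fst r - fst o) <= (eps/2)*(eps/2)).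
  { assert (0 <= Rabs (fst r - fst o)) by apply Rabs_pos.
    replace ((fst r - fst o) * (fst r - fst o)) with (Rabs (fst r - fst o) * Rabs (fst r - fst o)).
    - apply Rmult_le_compat; auto.
    - rewrite <- Rabs_mult. apply Rabs_right. apply Rle_ge, Rle_0_sqr. }
  assert (A2 : (snd r - snd o) * (snd r - snd o) <= (eps/2)*(eps/2)).
  { assert (0 <= Rabs (snd r - snd o)) by apply Rabs_pos.
    replace ((snd r - snd o) * (snd r - snd o)) with (Rabs (snd r - snd o) * Rabs (snd r - snd o)).
    - apply Rmult_le_compat; auto.
    - rewrite <- Rabs_mult. apply Rabs_right. apply Rle_ge, Rle_0_sqr. }
  nra.
Qed.

Theorem mainTheorem11 :
  forall (eps : R), 0 < eps <= 1 / 10 ->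
  forall (o : pt) (S : pt -> Prop),
    (forall x, S x -> square o eps x) ->
    (exists x, S x) ->
    circular_domain S ->
  forall (Lam : nat), (10 <= Lam)%nat ->
  forall (p : nat -> pt),
    p 0%nat = p Lam ->
    (forall k, (1 <= k <= Lam)%nat ->
       boundary (minkD S) (p k) /\ p k <> o /\
       is_cw_ang (psub (p (k - 1)%nat) o) (psub (p k) o) (2 * PI / INR Lam)) ->
  forall (i : nat), (1 <= i <= Lam)%nat ->
  forall (g : pt -> Prop), is_portion (boundary (minkD S)) p Lam i g ->
  forall (v : pt), norm v = 1 ->
  forall (th : R), is_cw_ang (psub (p i) o) v th ->
    (7 * (1 / INR Lam + eps) <= th <= PI - 7 * (1 / INR Lam + eps) \/
     PI + 7 * (1 / INR Lam + eps) <= th <= 2 * PI - 7 * (1 / INR Lam + eps)) ->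
    v_monotone v g.
Proof.
  intros eps Heps o S Hsq Hne _ Lam HLam p Hp0 Hp i Hi g [Hg [[f [Hf [Ef0 Ef1]]] Hgp]] v Hv th [_ [k [Hk Ev]]] Hth.
  set (phi := 2 * PI / INR Lam) in *.
  assert (HL : 10 <= INR Lam) by (replace 10 with (INR 10) by (simpl; lra); apply le_INR; lia).
  assert (HPI := PI_lt_35). assert (HPI0 := PI_RGT_0).
  assert (HiL : 0 < 1 / INR Lam <= 1/10).
  { split. apply Rdiv_lt_0_compat; lra. unfold Rdiv; rewrite !Rmult_1_l. apply Rinv_le_contravar; lra. }
  assert (Hphi_eq : phi = 2 * PI * (1 / INR Lam)) by (unfold phi; field; lra).
  assert (Hphi : 0 < phi < PI/2).
  { rewrite Hphi_eq. split. apply Rmult_lt_0_compat; lra.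
    assert (2 * PI * (1 / INR Lam) <= 2 * PI * (1/10)) by (apply Rmult_le_compat_l; lra). lra. }
  assert (Hphi7 : phi <= 7 * (1 / INR Lam)).
  { rewrite Hphi_eq. apply Rmult_le_compat_r; lra. }
  assert (HG : good S o eps).
  { split; [lra|split; [lra|split; auto]]. intros r Hr. apply square_norm; [lra|auto]. }
  destruct Hf as [Hf1 [Hf2 [Hf3 [Hf4 Hf5]]]].
  assert (Hbd : forall t, 0 <= t <= 1 -> boundary (minkD S) (f t)) by (intros; apply Hg, Hf1; auto).
  destruct (Hp i Hi) as [_ [_ [_ [k2 [Hk2 E2]]]]].
  fold phi in E2.
  assert (HJ : exists j, (1 <= j <= Lam)%nat /\ j <> i /\ j <> (i - 1)%nat /\ ~ (i = 1%nat /\ j = Lam) /\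
            is_cw_ang (psub (p j) o) (psub (p (i - 1)%nat) o) phi).
  { destruct (Nat.eq_dec i 1) as [->|Hi1].
    - exists (Lam - 1)%nat. split; [lia|split; [lia|split; [simpl; lia|split; [lia|]]]].
      simpl. rewrite Hp0. apply (Hp Lam). lia.
    - destruct (Nat.eq_dec i 2) as [->|Hi2].
      + exists Lam. split; [lia|split; [lia|split; [simpl; lia|split; [lia|]]]].
        simpl. rewrite <- Hp0. apply (Hp 1%nat). lia.
      + exists (i - 2)%nat. split; [lia|split; [lia|split; [lia|split; [lia|]]]].
        replace (i - 2)%nat with (i - 1 - 1)%nat by lia. apply (Hp (i - 1)%nat). lia. }
  destruct HJ as [j [Hj [Hji [Hji1 [Hji2 [_ [k1 [Hk1 E1]]]]]]]].
  assert (HPA : boundary (minkD S) (p j)) by (apply Hp; auto).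
  assert (Hna : forall t, 0 <= t <= 1 -> f t <> p j).
  { intros t Ht E. assert (Hgj : g (p j)) by (rewrite <- E; apply Hf1; auto).
    destruct (Hgp j Hj Hgj) as [|[|]]; tauto. }
  rewrite <- Ef0, <- Ef1 in *.
  assert (Hcont : cont01 f) by exact Hf4.
  assert (Hvv : dot v v = 1) by (rewrite <- norm_sq, Hv; ring).
  destruct (sin_7 eps Heps) as [Hs7 Hs0].
  assert (HaPI : 0 < 7 * eps <= PI / 2) by lra.
  assert (Hsg : exists sg, (sg = 1 \/ sg = -1) /\ sin (7*eps) <= sg * sin th /\ sin (7*eps) <= sg * sin (th + phi)).
  { destruct Hth as [Hth|Hth].
    - exists 1. split; [left; auto|]. rewrite !Rmult_1_l. split; apply sin_ge; auto; lra.
    - exists (-1). split; [right; auto|].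
      replace th with ((th - PI) + PI) by ring. replace (th - PI + PI + phi) with ((th - PI + phi) + PI) by ring.
      rewrite !neg_sin. replace (-1 * - sin (th - PI)) with (sin (th - PI)) by ring.
      replace (-1 * - sin (th - PI + phi)) with (sin (th - PI + phi)) by ring.
      split; apply sin_ge; auto; lra. }
  destruct Hsg as [sg [Hsg [Hs1 Hs2]]].
  assert (Hinj := h_inj S o eps f (p j) phi k1 k2 v k th sg (sin (7*eps)) HG Hcont Hf3 Hbd HPA Hna Hphi Hk1 Hk2 E1 E2 Hk Ev Hvv Hsg Hs1 Hs2 ltac:(lra) Hs0).
  assert (Hc : continuity (fun t => dot v (f (clamp t)))).
  { eapply continuity_ext'. 2: apply (cont_lin f (fst v) (snd v) 0 Hcont).
    intros x; unfold dot; ring. }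
  destruct (mono_dicho (fun t => dot v (f t)) Hc Hinj) as [Hm|Hm].
  - exists f. split; [split; [|split; [|split; [|split]]]; auto|].
    intros a b Ha Hab Hb. apply Hm; auto.
  - exists (fun a => f (1 - a)). split.
    + apply homeo_rev. split; [|split; [|split; [|split]]]; auto.
    + intros a b Ha Hab Hb. apply Hm; lra.
Qed.
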